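(* Let $\xi=(\tau_L,\delta_L,\tau_R,\delta_R)\in\Phi_{\rm BYG}$. Then $m_{\rm crit}>2\delta_R$.
   Context: Let $\Phi=\{\xi\in\mathbb{R}^4: \tau_L>\delta_L+1,\ \delta_L>0,\ \tau_R<-(\delta_R+1),\ \delta_R>0\}$. For $\xi\in\Phi$, the matrix $\begin{bmatrix}\tau_L&1\\-\delta_L&0\end{bmatrix}$ has real eigenvalues $0<\lambda_L^s<1<\lambda_L^u$. Let $\phi(\xi)=\delta_R-\left(\tau_R+\delta_L+\delta_R-(1+\tau_R)\lambda_L^u\right)\lambda_L^u$ and $\Phi_{\rm BYG}=\{\xi\in\Phi:\phi(\xi)>0\}$. Let $m_{\rm crit}=\lambda_L^s+\frac{2\tau_L}{(\lambda_L^u)^2-1}$. *)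

(* Defs.v *)
From Stdlib Require Import Reals Lra.
Open Scope R_scope.

Definition in_Phi (tL dL tR dR : R) : Prop :=
  tL > dL + 1 /\ dL > 0 /\ tR < - (dR + 1) /\ dR > 0.

(* Eigenvalues of [[tL, 1], [-dL, 0]]: roots of l^2 - tL l + dL = 0.
   For xi in Phi the discriminant is positive and 0 < lamLs < 1 < lamLu. *)
Definition lamLs (tL dL : R) : R := (tL - sqrt (tL ^ 2 - 4 * dL)) / 2.
Definition lamLu (tL dL : R) : R := (tL + sqrt (tL ^ 2 - 4 * dL)) / 2.

Definition phi (tL dL tR dR : R) : R :=
  dR - (tR + dL + dR - (1 + tR) * lamLu tL dL) * lamLu tL dL.

Definition in_Phi_BYG (tL dL tR dR : R) : Prop :=
  in_Phi tL dL tR dR /\ phi tL dL tR dR > 0.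

Definition m_crit (tL dL : R) : R :=
  lamLs tL dL + 2 * tL / (lamLu tL dL ^ 2 - 1).

(* Main.v *)
Require Import Defs.
From Stdlib Require Import Reals Lra Psatz.
Open Scope R_scope.

Theorem lemma4p3 (tL dL tR dR : R) :
  in_Phi_BYG tL dL tR dR -> m_crit tL dL > 2 * dR.
Proof.
  intros [[h1 [h2 [h3 h4]]] hphi].
  unfold phi, m_crit, lamLs, lamLu in *.
  set (D := tL ^ 2 - 4 * dL) in *.
  assert (hD : D > 0) by (unfold D; simpl; pose proof (Rle_0_sqr (dL - 1)); unfold Rsqr in *; nra).
  set (q := sqrt D) in *.
  assert (hq0 : 0 <= q) by apply sqrt_pos.
  assert (hqq : q * q = D) by (apply sqrt_sqrt; lra).
  set (u := (tL + q) / 2) in *.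
  set (s := (tL - q) / 2) in *.
  assert (Hsum : tL = u + s) by (unfold u, s; field).
  assert (Hprod : dL = u * s) by (unfold u, s; unfold D in hqq; simpl in hqq; nra).
  assert (hs : s > 0).
  { unfold s. assert (q < tL) by (unfold D in hqq; simpl in hqq; nra). lra. }
  assert (hu : u > 1).
  { unfold u. assert (q > 0) by nra. destruct (Rle_dec 2 tL). lra.
    assert (q > 2 - tL) by (unfold D in hqq; simpl in hqq; nra). lra. }
  clearbody u s q D.
  subst tL dL.
  assert (Hp : (u - 1) * (- dR + tR * u) + u ^ 2 * (1 - s) > 0) by nra.
  assert (Ht : tR * u * (u - 1) < - (dR + 1) * u * (u - 1)).
  { assert (u * (u - 1) > 0) by nra. nra. }
  assert (Hk : dR * (u ^ 2 - 1) < u - s * u ^ 2) by nra.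
  assert (hd : u ^ 2 - 1 > 0) by nra.
  apply Rlt_gt.
  apply Rmult_lt_reg_r with (u ^ 2 - 1); [lra|].
  replace ((s + 2 * (u + s) / (u ^ 2 - 1)) * (u ^ 2 - 1))
    with (s * (u ^ 2 - 1) + 2 * (u + s)) by (field; lra).
  nra.
Qed.
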